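(* Let $F$ be a chordal graph. (b) For every function $f:\wp(V_F)\to\mathbb R$, \[ \sum_{S\subseteq\mathsf{MaxCliques}(F)} -(-1)^{|S|} f\big({\textstyle\bigcap}S\big)=\sum_{A\subseteq V_F}(L_{V_F}f)(A)\cdot\mathsf{CC}(F|_A). \] (c) For every graph $G$, every homomorphism $\varphi:F\to G$, and every function $g:\wp(V_G)\to\mathbb R$, \[ \sum_{S\subseteq\mathsf{MaxCliques}(F)} -(-1)^{|S|} g\big(\varphi({\textstyle\bigcap}S)\big)=\sum_{A\subseteq V_G}(L_{V_G}g)(A)\cdot\mathsf{CC}\big(F|_{\varphi^{-1}(A)}\big). \]
   Context: Graphs are finite directed graphs; cliques, chordality, connectivity refer to the underlying simple undirected graph (edges $\{v,w\}$, $v\ne w$, with $(v,w)$ or $(w,v)$ an edge). $\mathsf{MaxCliques}(F)$ is the set of maximal cliques; $\bigcap S$ is the intersection of the family $S$, with $\bigcap\emptyset=\emptyset$; $\varphi(A)$ is the image of $A$. $F$ is chordal if its underlying simple graph has no induced cycle of length $\ge4$. $F|_A$ is the induced subgraph on $A$ and $\mathsf{CC}$ its number of connected components, with $\mathsf{CC}(F|_\emptyset)=0$. For a finite set $V$ and $f:\wp(V)\to\mathbb R$, $L_Vf:\wp(V)\to\mathbb R$ is defined by $(L_Vf)(A)=\sum_{B\subseteq V:\,A\cup B=V} -(-1)^{|A\cap B|} f(B)$. *)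

(* Defs.v *)
From HB Require Import structures.
From mathcomp Require Import all_boot all_order all_algebra.
Set Implicit Arguments. Unset Strict Implicit. Unset Printing Implicit Defensive.
Import Order.TTheory GRing.Theory Num.Theory.

(* A finite directed graph: a finType T of vertices with edge relation e : rel T.
   Cliques, chordality, connectivity refer to the underlying simple graph. *)

Definition uadj (T : finType) (e : rel T) (x y : T) : bool :=
  (x != y) && (e x y || e y x).

Definition is_clique (T : finType) (e : rel T) (A : {set T}) : bool :=
  [forall x in A, forall y in A, (x != y) ==> uadj e x y].

Definition MaxCliques (T : finType) (e : rel T) : {set {set T}} :=
  [set A | maxset (is_clique e) A].

Definition induced_cycle (T : finType) (e : rel T) (s : seq T) : Prop :=
  [/\ uniq s, 4 <= size s &
      forall (x0 : T) i j, i < size s -> j < size s ->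
        uadj e (nth x0 s i) (nth x0 s j)
        = ((j == i.+1 %% size s) || (i == j.+1 %% size s))].

Definition chordal (T : finType) (e : rel T) : Prop :=
  forall s : seq T, ~ induced_cycle e s.

(* intersection of a family, with the convention  \bigcap set0 = set0 *)
Definition bigcapS (T : finType) (S : {set {set T}}) : {set T} :=
  if S == set0 then set0 else \bigcap_(X in S) X.

Definition induced_adj (T : finType) (e : rel T) (A : {set T}) : rel T :=
  [rel x y | [&& x \in A, y \in A & uadj e x y]].

Definition CC (T : finType) (e : rel T) (A : {set T}) : nat :=
  #| [set [set y in A | connect (induced_adj e A) x y] | x in A] |.

Local Open Scope ring_scope.

Definition LV (R : nzRingType) (T : finType) (f : {set T} -> R) (A : {set T}) : R :=
  \sum_(B : {set T} | A :|: B == setT) - ((-1) ^+ #|A :&: B|) * f B.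

(* Main.v *)
Require Import Defs.
From HB Require Import structures.
From mathcomp Require Import all_boot all_order all_algebra.
From Stdlib Require Import Classical.
Import Order.TTheory GRing.Theory Num.Theory.
Set Implicit Arguments. Unset Strict Implicit. Unset Printing Implicit Defensive.


Definition walk (T : Type) (x0 : T) (r : rel T) (s : seq T) :=
  forall k, k.+1 < size s -> r (nth x0 s k) (nth x0 s k.+1).

Lemma connect_walk (T : finType) (r : rel T) (x0 x y : T) :
  connect r x y -> exists s, [/\ walk x0 r s, 0 < size s, nth x0 s 0 = x &
                                 nth x0 s (size s).-1 = y].
Proof.
move/connectP=> [p pP ->]; exists (x :: p); split => //.
- by move=> k /= hk; apply: (pathP x0 pP).
- by rewrite /= (last_nth x); apply: set_nth_default.
Qed.

Lemma walk_connect (T : finType) (r : rel T) (x0 : T) s :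
  walk x0 r s -> 0 < size s -> connect r (nth x0 s 0) (nth x0 s (size s).-1).
Proof.
case: s => [//|x p] /= W _; apply/connectP; exists p.
  by apply/(pathP x0) => i hi; apply: (W i).
by rewrite (last_nth x); apply: set_nth_default.
Qed.

Lemma walk_take (T : Type) (x0 : T) r s n : walk x0 r s -> walk x0 r (take n s).
Proof.
move=> W k; rewrite size_take => hk.
have [hkn hks] : k.+1 < n /\ k.+1 < size s.
  move: hk; case: ifP => h1 h2; first by split => //; apply: ltn_trans h1.
  by split => //; apply: (leq_trans h2); rewrite leqNgt h1.
by rewrite !nth_take //; [apply: W | apply: ltnW].
Qed.

Lemma walk_drop (T : Type) (x0 : T) r s n : walk x0 r s -> walk x0 r (drop n s).
Proof.
move=> W k; rewrite size_drop => hk; rewrite !nth_drop addnS; apply: W.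
by rewrite -addnS -ltn_subRL.
Qed.

Lemma walk_shortcut (T : Type) (x0 : T) r s i j : walk x0 r s -> i < j -> j < size s ->
  (if i is i'.+1 then r (nth x0 s i') (nth x0 s j) else nth x0 s 0 = nth x0 s j) ->
  [/\ walk x0 r (take i s ++ drop j s), size (take i s ++ drop j s) < size s,
      nth x0 (take i s ++ drop j s) 0 = nth x0 s 0 &
      nth x0 (take i s ++ drop j s) (size (take i s ++ drop j s)).-1 = nth x0 s (size s).-1].
Proof.
move=> W hij hjs hyp.
have his : i < size s by apply: ltn_trans hjs.
have szt : size (take i s) = i by rewrite size_take his.
have szs : size (take i s ++ drop j s) = i + (size s - j) by rewrite size_cat szt size_drop.
split.
- move=> k hk; rewrite !nth_cat szt.
  case: (ltngtP k.+1 i) => hki.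
  + rewrite nth_take ?(ltnW hki) // nth_take //; apply: W; exact: ltn_trans hki his.
  + rewrite subSn // !nth_drop addnS; apply: W.
    have hik : i <= k := hki.
    have h2 : (k - i).+1 < size s - j.
      by rewrite -(ltn_add2l i) addnS (subnKC hik) -szs.
    by move: h2; rewrite ltn_subRL addnS.
  + rewrite -hki subnn nth_drop addn0 nth_take //.
    by move: hyp; rewrite -hki.
- by rewrite szs -ltn_subRL ltn_sub2l.
- case: i hij his hyp szt szs => [|i] hij his hyp szt szs.
    by rewrite take0 /= nth_drop addn0 hyp.
  by rewrite nth_cat szt ltn0Sn nth_take.
- rewrite szs nth_cat szt.
  have hpos : 0 < size s - j by rewrite subn_gt0.
  rewrite ltnNge -subn1 -addnBA // leq_addr /= nth_drop.
  congr nth; rewrite addKn -subnDA addnBA; last by rewrite addn1.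
  by rewrite subnDl subn1.
Qed.


Definition conn (T : finType) (e : rel T) (B : {set T}) := connect (induced_adj e B).
Definition comp (T : finType) (e : rel T) (B : {set T}) (x : T) :=
  [set y in B | conn e B x y].

Lemma CCE (T : finType) (e : rel T) (B : {set T}) : CC e B = #|[set comp e B x | x in B]|.
Proof. by []. Qed.

Lemma iadjE (T : finType) (e : rel T) (B : {set T}) x y :
  induced_adj e B x y = [&& x \in B, y \in B & uadj e x y].
Proof. by []. Qed.

Lemma uadj_sym (T : finType) (e : rel T) x y : uadj e x y = uadj e y x.
Proof. by rewrite /uadj eq_sym orbC. Qed.

Lemma uadj_irr (T : finType) (e : rel T) x : uadj e x x = false.
Proof. by rewrite /uadj eqxx. Qed.

Lemma iadj_sym (T : finType) (e : rel T) (B : {set T}) : symmetric (induced_adj e B).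
Proof. by move=> x y; rewrite /induced_adj /= uadj_sym andbCA. Qed.

Lemma conn_sym (T : finType) (e : rel T) (B : {set T}) x y : conn e B x y = conn e B y x.
Proof. exact: (sym_connect_sym (@iadj_sym T e B)). Qed.

Lemma conn_trans (T : finType) (e : rel T) (B : {set T}) x y z :
  conn e B x y -> conn e B y z -> conn e B x z.
Proof. exact: connect_trans. Qed.

Lemma conn1 (T : finType) (e : rel T) (B : {set T}) x y :
  x \in B -> y \in B -> uadj e x y -> conn e B x y.
Proof. by move=> hx hy h; apply: connect1; rewrite iadjE hx hy h. Qed.

Lemma conn_mem (T : finType) (e : rel T) (B : {set T}) x y : conn e B x y -> x \in B -> y \in B.
Proof.
move/connectP=> [p pP ->]; elim: p x pP => [|z p IH] x //= /andP[/and3P[_ hz _] hp] _.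
exact: IH.
Qed.

Lemma conn_sub (T : finType) (e : rel T) (B B' : {set T}) x y :
  B \subset B' -> conn e B x y -> conn e B' x y.
Proof.
move=> sBB'; apply: connect_sub => a b /and3P[ha hb hab].
by apply: connect1; rewrite iadjE (subsetP sBB' _ ha) (subsetP sBB' _ hb).
Qed.

Lemma conn_restrict (T : finType) (e : rel T) (B B' : {set T}) x z :
  conn e B x z -> x \in B' -> (forall w, conn e B x w -> w \in B -> w \in B') ->
  conn e B' x z.
Proof.
move/connectP=> [p pP ->]; elim: p x pP => [|y p IH] x /=; first by move=> *; apply: connect0.
move=> /andP[/and3P[hx hy hxy] hp] hx' H.
have hy' : y \in B' by apply: H => //; apply: connect1; rewrite iadjE hx hy.
apply: conn_trans (conn1 hx' hy' hxy) _; apply: IH => // w hw hwB.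
apply: H => //; apply: conn_trans hw; apply: connect1; rewrite iadjE hx hy //.
Qed.

Lemma comp_eq (T : finType) (e : rel T) (B : {set T}) x y : x \in B -> y \in B ->
  (comp e B x == comp e B y) = conn e B x y.
Proof.
move=> hx hy; apply/eqP/idP => [h | h].
  have : y \in comp e B y by rewrite inE hy; apply: connect0.
  by rewrite -h inE => /andP[].
apply/setP=> z; rewrite !inE; case: (z \in B) => //=; apply/idP/idP => hz.
  by apply: conn_trans hz; rewrite conn_sym.
exact: conn_trans hz.
Qed.

Lemma card_imset_ker (T U V : finType) (D : {set T}) (f : T -> U) (g : T -> V) :
  {in D &, forall x y, (f x == f y) = (g x == g y)} -> #|f @: D| = #|g @: D|.
Proof.
move=> K; case: (set_0Vmem D) => [->|[x0 hx0]]; first by rewrite !imset0 !cards0.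
pose h u := if [pick x in D | f x == u] is Some x then g x else g x0.
have hf x : x \in D -> h (f x) = g x.
  move=> hx; rewrite /h; case: pickP => [y /andP[hy /eqP hyx]|/(_ x)].
    by apply/eqP; rewrite -K // hyx.
  by rewrite hx eqxx.
have -> : g @: D = h @: (f @: D).
  apply/setP=> w; apply/imsetP/imsetP => [[x hx ->]|[u /imsetP[x hx ->] ->]].
    by exists (f x); [apply: imset_f | rewrite hf].
  by exists x => //; rewrite hf.
apply/esym/card_in_imset => u1 u2 /imsetP[x1 hx1 ->] /imsetP[x2 hx2 ->].
by rewrite !hf // => /eqP; rewrite -K // => /eqP.
Qed.


Lemma cc_step (T : finType) (e : rel T) (A : {set T}) v :
  v \in A ->
  (forall x y, x \in [set w in A | uadj e v w] -> y \in [set w in A | uadj e v w] ->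
      conn e (A :\ v) x y -> conn e [set w in A | uadj e v w] x y) ->
  CC e (A :\ v) + 1 = CC e [set w in A | uadj e v w] + CC e A.
Proof.
set N := [set w in A | uadj e v w]; set A' := A :\ v => hv K.
have sA'A : A' \subset A by apply: subsetDl.
have sNA' : N \subset A'.
  by apply/subsetP=> w; rewrite !inE => /andP[hw hvw]; rewrite hw andbT; apply: contraTneq hvw => ->; rewrite uadj_irr.
have hA'E w : (w \in A') = (w != v) && (w \in A) by rewrite !inE.
have compi x : x \in A' -> ~~ conn e A x v -> comp e A x = comp e A' x.
  move=> hx hxv; apply/setP=> z; rewrite !inE; apply/andP/andP => [[hz hxz]|[hz hxz]].
    have hxz' : conn e A' x z.
      apply: conn_restrict hxz hx _ => w hw hwA; rewrite hA'E hwA andbT.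
      by apply: contraNneq hxv => <-.
    by split => //; rewrite -hA'E; apply: conn_mem hxz' hx.
  by rewrite (subsetP sA'A _ (conn_mem hxz hx)); split => //; apply: conn_sub hxz.
have compii x : x \in A' -> conn e A x v -> exists2 y, y \in N & conn e A' x y.
  move=> hx /connectP[p pP hlast]; elim: p x hx pP hlast => [|z p IH] x hx /=.
    by move=> _ hvx; move: hx; rewrite hA'E hvx eqxx.
  move=> /andP[/and3P[hxA hzA hxz] hp] hl.
  case: (eqVneq z v) => [hzv|hzv].
    exists x; last by apply: connect0.
    by rewrite inE hxA uadj_sym -hzv.
  have hz' : z \in A' by rewrite hA'E hzv.
  have [y hy hzy] := IH z hz' hp hl.
  by exists y => //; apply: conn_trans hzy; apply: conn1.
have compiii x y : x \in A' -> y \in N -> conn e A' x y -> conn e A x v.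
  move=> hx hy hxy; apply: conn_trans (conn_sub sA'A hxy) _.
  move: hy; rewrite inE => /andP[hyA hvy]; apply: conn1 => //; by rewrite uadj_sym.
have hvcomp : v \in comp e A v by rewrite inE hv; apply: connect0.
rewrite !CCE.
set P := [set comp e A x | x in A].
set P' := [set comp e A' x | x in A'].
set Q := [set C : {set T} | C :&: N != set0].
have E1 : P' :&: Q = [set comp e A' x | x in N].
  apply/setP=> C; rewrite !inE; apply/andP/imsetP => [[/imsetP[x hx ->] hne]|[y hy ->]].
    have [z] := set0Pn _ hne; rewrite !inE => /andP[/andP[hzA' hxz] hzN].
    exists z; first by rewrite inE hzN.
    by apply/eqP; rewrite comp_eq // hA'E.
  split; first by apply: imset_f; apply: (subsetP sNA').
  apply/set0Pn; exists y; rewrite in_setI hy andbT /comp in_set (subsetP sNA' _ hy) /=; apply: connect0.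
have E2 : P' :\: Q = P :\ comp e A v.
  apply/setP=> C; rewrite !inE; apply/andP/andP => [[hnq /imsetP[x hx hC]]|[hne /imsetP[x hx hC]]]; subst C.
    have hxv : ~~ conn e A x v.
      apply/negP=> hxv; have [y hy hxy] := compii x hx hxv; move/negP: hnq; apply.
      by apply/set0Pn; exists y; rewrite in_setI hy andbT /comp in_set (subsetP sNA' _ hy) hxy.
    rewrite -(compi x hx hxv); split; last by apply: imset_f; rewrite (subsetP sA'A).
    apply: contra hxv => /eqP /setP /(_ v); rewrite hvcomp inE => /andP[_].
    by rewrite conn_sym.
  have hxv : ~~ conn e A x v.
    by apply: contra hne => hxv; rewrite comp_eq.
  have hxA' : x \in A'.
    rewrite hA'E hx andbT; apply: contraNneq hxv => ->; apply: connect0.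
  rewrite compi //; split; last by apply: imset_f.
  apply/set0Pn => [[z]]; rewrite !inE => /andP[/andP[hzA' hxz] hzN].
  by move/negP: hxv; apply; apply: (compiii x z hxA' _ hxz); rewrite inE.
have ->: #|P'| = #|P' :&: Q| + #|P' :\: Q| by rewrite cardsID.
rewrite E1 E2 (@card_imset_ker _ _ _ N (comp e A') (comp e N)); last first.
  move=> x y hx hy; rewrite !comp_eq //; try exact: (subsetP sNA').
  apply/idP/idP; first exact: K.
  exact: conn_sub.
rewrite (cardsD1 (comp e A v) P) imset_f // add1n addn1.
by rewrite addnS.
Qed.


Lemma modS_eq m a b : a < m -> b < m -> (b.+1 == a.+2 %% m.+1) = (b == a.+1).
Proof.
move=> ha hb; case: (ltngtP a.+2 m.+1) => h.
- by rewrite modn_small.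
- by move: h; rewrite ltnS => h; move: (leq_trans ha h); rewrite ltnn.
- rewrite h modnn /=; apply/esym/negbTE; move: h => [hm]; rewrite -hm in hb.
  by rewrite neq_ltn hb.
Qed.

Lemma cycle_contra (T : finType) (e : rel T) (v : T) (s : seq T) :
  chordal e -> 3 <= size s -> v \notin s -> uniq s ->
  (forall a b, a < size s -> b < size s ->
     uadj e (nth v s a) (nth v s b) = (b == a.+1) || (a == b.+1)) ->
  (forall a, a < size s -> uadj e v (nth v s a) = (a == 0) || (a == (size s).-1)) ->
  False.
Proof.
move=> Hch hs hv hu Hss Hvs; apply: (Hch (v :: s)); split.
- by rewrite /= hv hu.
- by [].
move=> x0 i j; rewrite /= ltnS => hi hj.
have m1 : 1 %% (size s).+1 = 1 by rewrite modn_small // ltnS; apply: leq_trans hs.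
case: i hi => [|a] ha; case: j hj => [|b] hb /=.
- by rewrite uadj_irr m1.
- rewrite (@set_nth_default _ s v x0 b hb) Hvs // m1 eqSS; congr (_ || _).
  case: (ltngtP b.+2 (size s).+1) => h.
  + rewrite modn_small //=; apply/negbTE; rewrite neq_ltn; apply/orP; left.
    rewrite -ltnS prednK; last by apply: leq_trans hs.
    by rewrite ltnS in h.
  + by move: h; rewrite !ltnS leqNgt; move: hb; rewrite ?ltnS => ->.
  + by rewrite h modnn eqxx; move: h => [<-]; rewrite eqxx.
- rewrite (@set_nth_default _ s v x0 a ha) uadj_sym Hvs // m1 eqSS [in RHS]orbC; congr (_ || _).
  case: (ltngtP a.+2 (size s).+1) => h.
  + rewrite modn_small //=; apply/negbTE; rewrite neq_ltn; apply/orP; left.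
    rewrite -ltnS prednK; last by apply: leq_trans hs.
    by rewrite ltnS in h.
  + by move: h; rewrite !ltnS leqNgt; move: ha; rewrite ?ltnS => ->.
  + by rewrite h modnn eqxx; move: h => [<-]; rewrite eqxx.
- by rewrite (@set_nth_default _ s v x0 a ha) (@set_nth_default _ s v x0 b hb) Hss // !modS_eq.
Qed.


Lemma chordal_key (T : finType) (e : rel T) (A : {set T}) v :
  chordal e -> v \in A ->
  forall x y, x \in [set w in A | uadj e v w] -> y \in [set w in A | uadj e v w] ->
      conn e (A :\ v) x y -> conn e [set w in A | uadj e v w] x y.
Proof.
set N := [set w in A | uadj e v w]; set A' := A :\ v => Hch hv.
set r := induced_adj e A'.
have hA'E w : (w \in A') = (w != v) && (w \in A) by rewrite !inE.
have sNA' : N \subset A'.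
  by apply/subsetP=> w; rewrite !inE => /andP[hw hvw]; rewrite hw andbT; apply: contraTneq hvw => ->; rewrite uadj_irr.
have main : forall n s, size s <= n -> walk v r s -> 0 < size s -> nth v s 0 \in N ->
    nth v s (size s).-1 \in N -> conn e N (nth v s 0) (nth v s (size s).-1).
  elim=> [|n IH] s hn W hpos h0 hl; first by move: (leq_trans hpos hn).
  case: (classic (exists i j, [/\ i < j, j < size s & if i is i'.+1 then r (nth v s i') (nth v s j)
            else nth v s 0 = nth v s j])) => [[i [j [hij hjs hc]]]|nQ1].
    have [W' hsz h0' hl'] := walk_shortcut W hij hjs hc.
    rewrite -h0' -hl'; apply: IH => //; first by rewrite -ltnS; apply: leq_trans hsz hn.
    - by rewrite size_cat size_drop addn_gt0 subn_gt0 hjs orbT.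
    - by rewrite h0'.
    - by rewrite hl'.
  case: (classic (exists i, [/\ 0 < i, i < (size s).-1 & nth v s i \in N])) => [[i [hi0 hi hiN]]|nQ2].
    have his1 : i.+1 < size s.
      by move: hi; rewrite -ltnS prednK.
    have his : i < size s by apply: ltnW.
    apply: (@conn_trans _ _ _ _ (nth v s i)).
      have := IH (take i.+1 s) _ (@walk_take _ v r s i.+1 W) _ _ _.
      rewrite size_take his1 /= !nth_take //; apply => //.
      by rewrite -ltnS; apply: leq_trans his1 hn.
    have := IH (drop i s) _ (@walk_drop _ v r s i W) _ _ _.
    have E : i + (size s - i).-1 = (size s).-1.
      by rewrite -subnS addnBA // -addn1 subnDl subn1.
    rewrite size_drop !nth_drop addn0 E; apply => //.
    - apply: leq_trans (leq_sub2l _ hi0) _; rewrite subn1 -ltnS prednK //.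
    - by rewrite subn_gt0.
  have Mem a : a < size s -> nth v s a \in A'.
    move=> ha; case: (ltnP a.+1 (size s)) => h.
      by have := W a h; rewrite /r iadjE => /andP[].
    have -> : a = (size s).-1.
      by apply/eqP; rewrite eqn_leq -ltnS prednK // ha /= -ltnS prednK.
    exact: (subsetP sNA').
  have MemA a : a < size s -> nth v s a \in A by move/Mem; rewrite hA'E => /andP[].
  have Nch a b : a < b -> b < size s -> uadj e (nth v s a) (nth v s b) = (b == a.+1).
    move=> hab hb; case: (eqVneq b a.+1) => [hba|hne].
      by subst b; have := W a hb; rewrite /r iadjE => /and3P[_ _ ->]; rewrite ?eqxx.
    apply/negbTE/negP => hadj; apply: nQ1; exists a.+1, b; split => //.
      by rewrite ltn_neqAle eq_sym hne.
    by rewrite /r iadjE Mem ?Mem //; apply: ltn_trans hb.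
  case: (ltngtP (size s) 2) => hs2.
  - move: hpos hs2; case: (size s) => [|[|]] //= _ _.
    by apply: connect0.
  - exfalso; apply: (@cycle_contra T e v s Hch hs2).
    + apply/negP => /(nthP v) [a ha hav]; move: (Mem a ha); rewrite hav hA'E eqxx.
      by [].
    + apply/negPn/negP => /(uniqPn v) [a [b [hab hb hE]]]; apply: nQ1; exists a, b; split => //.
      case: a hab hE => [|a] hab hE //.
      rewrite -hE; apply: W; by apply: ltn_trans hb.
    + move=> a b ha hb; case: (ltngtP a b) => hab.
      * rewrite Nch //; rewrite (ltn_eqF (ltn_trans hab (ltnSn b))) orbF //.
      * rewrite uadj_sym Nch // orbC (ltn_eqF (ltn_trans hab (ltnSn a))) orbF //.
      * by rewrite hab uadj_irr (ltn_eqF (ltnSn b)).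
    + move=> a ha; case: (posnP a) => [->|ha0].
        by move: h0; rewrite inE => /andP[_ ->].
      case: (eqVneq a (size s).-1) => [->|hne].
        by move: hl; rewrite inE => /andP[_ ->]; rewrite orbT.
      rewrite ?orbF; apply/negbTE/negP => hadj; apply: nQ2; exists a; split => //.
        by rewrite ltn_neqAle hne /= -ltnS prednK.
      by rewrite inE MemA.
  - move: h0 hl; rewrite hs2 /= => h0 hl; apply: conn1.
    + exact: h0.
    + exact: hl.
    + by have := W 0; rewrite hs2 /r iadjE => /(_ isT) /and3P[].
move=> x y hx hy /(connect_walk v) [s [W hpos h0 hl]].
rewrite -h0 -hl; apply: main (leqnn _) W hpos _ _; by rewrite ?h0 ?hl.
Qed.

Lemma cliqueP (T : finType) (e : rel T) (Q : {set T}) :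
  reflect (forall x y, x \in Q -> y \in Q -> x != y -> uadj e x y) (is_clique e Q).
Proof.
apply: (iffP forallP) => [H x y hx hy hxy | H x].
  by move: (H x); rewrite hx => /forallP /(_ y); rewrite hy hxy.
by apply/implyP => hx; apply/forallP => y; apply/implyP => hy; apply/implyP; apply: H.
Qed.

Local Open Scope ring_scope.

Definition chi (R : nzRingType) (T : finType) (e : rel T) (A : {set T}) : R :=
  \sum_(Q : {set T} | [&& Q \subset A, is_clique e Q & Q != set0]) - (-1) ^+ #|Q|.

Lemma chi0 (R : nzRingType) (T : finType) (e : rel T) : chi R e set0 = 0.
Proof.
rewrite /chi big_pred0 // => Q /=; rewrite subset0; case: eqP => //= _; by rewrite andbF.
Qed.

Lemma CC0 (T : finType) (e : rel T) : CC e set0 = 0%N.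
Proof. by rewrite CCE imset0 cards0. Qed.

Lemma chi_step (R : nzRingType) (T : finType) (e : rel T) (A : {set T}) v :
  v \in A ->
  chi R e A = chi R e (A :\ v) + 1 - chi R e [set w in A | uadj e v w].
Proof.
set N := [set w in A | uadj e v w]; move=> hv.
rewrite /chi (bigID (fun Q : {set T} => v \in Q)) /= addrC.
have -> : \sum_(i : {set T} | [&& i \subset A, is_clique e i & i != set0] && (v \notin i)) - (-1) ^+ #|i|
   = \sum_(Q : {set T} | [&& Q \subset A :\ v, is_clique e Q & Q != set0]) - (-1) ^+ #|Q| :> R.
  apply: eq_bigl => Q; rewrite -!andbA.
  suff <- : (Q \subset A) && (v \notin Q) = (Q \subset A :\ v).
    by case: (Q \subset A) (is_clique e Q) (Q != set0) (v \notin Q) => [] [] [] [].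
  apply/andP/subsetP => [[/subsetP sQ hv'] w hw|sQ].
    by rewrite !inE (sQ _ hw) andbT; apply: contraNneq hv' => <-.
  split; last by apply/negP => hvQ; move: (sQ _ hvQ); rewrite !inE eqxx.
  by apply/subsetP => w /sQ; rewrite inE => /andP[].
rewrite -!addrA; congr (_ + _).
rewrite (reindex_onto (fun Q' => v |: Q') (fun Q => Q :\ v)) /=; last first.
  by move=> Q /andP[_ hvQ]; rewrite setD1K.
have -> : \sum_(j : {set T} | [&& [&& v |: j \subset A, is_clique e (v |: j) & v |: j != set0]
           && (v \in v |: j) & (v |: j) :\ v == j]) - (-1) ^+ #|v |: j|
   = \sum_(Q' : {set T} | (Q' \subset N) && is_clique e Q') (-1) ^+ #|Q'| :> R.
  apply: eq_big => Q'.
    have hvN : v \notin N by rewrite inE uadj_irr andbF.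
    rewrite setU11 andbT.
    have -> : (v |: Q' != set0) by apply/set0Pn; exists v; rewrite setU11.
    rewrite andbT.
    apply/andP/andP => [[/andP[sA cl] /eqP hE]|[sN cl]].
      have hvQ : v \notin Q' by rewrite -hE !inE eqxx.
      split.
        apply/subsetP => w hw; rewrite inE (subsetP sA) ?inE ?hw ?orbT //=.
        move/cliqueP: cl; apply; rewrite ?inE ?eqxx ?hw ?orbT //.
        by apply: contraNneq hvQ => ->.
      apply/cliqueP => x y hx hy; move/cliqueP: cl; apply; by rewrite inE ?hx ?hy orbT.
    have hvQ : v \notin Q' by apply/negP => hq; move/negP: hvN; apply; apply: (subsetP sN).
    split; last by rewrite setU1K.
    apply/andP; split.
      apply/subsetP => w; rewrite !inE => /orP[/eqP -> //| /(subsetP sN)].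
      by rewrite inE => /andP[].
    apply/cliqueP => x y; rewrite !inE => /orP[/eqP ->|hx] /orP[/eqP ->|hy]; rewrite ?eqxx //.
    + by move=> _; move: (subsetP sN _ hy); rewrite inE => /andP[].
    + by move=> _; move: (subsetP sN _ hx); rewrite inE uadj_sym => /andP[].
    + by move/cliqueP: cl; apply.
  move=> /andP[_ /eqP hE].
  have hvQ : v \notin Q' by rewrite -hE !inE eqxx.
  by rewrite cardsU1 hvQ exprS mulN1r opprK.
rewrite (bigD1 set0) /=; last by rewrite sub0set; apply/cliqueP => x y; rewrite inE.
rewrite cards0 expr0; congr (_ + _).
rewrite -sumrN; apply: eq_big => [Q|Q _]; [by rewrite andbA | by rewrite opprK].

Qed.

Lemma chi_CC (R : nzRingType) (T : finType) (e : rel T) :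
  chordal e -> forall A : {set T}, chi R e A = (CC e A)%:R.
Proof.
move=> Hch A; move: {2}#|A| (leqnn #|A|) => n; elim: n A => [|n IH] A hA.
  by move: hA; rewrite leqn0 => /eqP/cards0_eq ->; rewrite chi0 CC0.
case: (set_0Vmem A) => [->|[v hv]]; first by rewrite chi0 CC0.
have hA' : (#|A :\ v| <= n)%N by move: hA; rewrite (cardsD1 v A) hv.
rewrite (chi_step R e hv) !IH //.
  have := cc_step hv (chordal_key Hch hv) => /(congr1 (fun k => k%:R : R)).
  by rewrite !natrD => ->; rewrite addrC addKr.
apply: leq_trans hA'; apply: subset_leq_card; apply/subsetP => w.
rewrite !inE => /andP[hw hvw]; rewrite hw andbT.
by apply: contraTneq hvw => ->; rewrite uadj_irr.
Qed.


Lemma alt_sum (R : nzRingType) (U : finType) (Y : {set U}) :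
  \sum_(C : {set U} | C \subset Y) (-1) ^+ #|C| = (Y == set0)%:R :> R.
Proof.
case: (set_0Vmem Y) => [->|[u hu]].
  rewrite (bigD1 set0) ?sub0set //= big_pred0 ?cards0 ?expr0 ?addr0 ?eqxx //.
  by move=> C; rewrite subset0 andbN.
have -> : (Y == set0) = false by apply/negbTE/set0Pn; exists u.
rewrite (bigID (fun C : {set U} => u \in C)) /=.
rewrite (reindex_onto (fun C => u |: C) (fun C => C :\ u)) /=; last first.
  by move=> C /andP[_ huC]; rewrite setD1K.
have -> : \sum_(j : {set U} | (u |: j \subset Y) && (u \in u |: j) && ((u |: j) :\ u == j))
    (-1) ^+ #|u |: j| = - \sum_(C : {set U} | (C \subset Y) && (u \notin C)) (-1) ^+ #|C| :> R.
  rewrite -sumrN; apply: eq_big => C.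
    rewrite setU11 andbT; apply/andP/andP => [[sY /eqP hE]|[sY huC]].
      have huC : u \notin C by rewrite -hE !inE eqxx.
      split => //; apply: subset_trans sY; apply: subsetUr.
    by rewrite setU1K // eqxx; split => //; rewrite subUset sub1set hu.
  move=> /andP[_ /eqP hE].
  have huC : u \notin C by rewrite -hE !inE eqxx.
  by rewrite cardsU1 huC exprS mulN1r.
by rewrite addNr.
Qed.

Lemma ind_sum (R : nzRingType) (U : finType) (Y : {set U}) :
  (Y != set0)%:R = \sum_(Q : {set U} | (Q \subset Y) && (Q != set0)) - (-1) ^+ #|Q| :> R.
Proof.
have := alt_sum R Y; rewrite (bigD1 set0) ?sub0set //= cards0 expr0 => H.
rewrite sumrN; set X := \sum_(i : {set U} | _) _ in H *.
have -> : X = (Y == set0)%:R - 1 by rewrite -H (addrC 1) addrK.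
by case: (Y == set0); rewrite /= ?subrr ?oppr0 // sub0r opprK.
Qed.


Lemma clique_sub (T : finType) (e : rel T) (K Q : {set T}) :
  is_clique e K -> Q \subset K -> is_clique e Q.
Proof.
move=> /cliqueP H /subsetP sQ; apply/cliqueP => x y hx hy; apply: H; exact: sQ.
Qed.

Lemma clique_MC (T : finType) (e : rel T) (Q : {set T}) :
  is_clique e Q = ([set K in MaxCliques e | Q \subset K] != set0).
Proof.
apply/idP/set0Pn => [hQ | [K]].
  have [K hK sQK] := maxset_exists hQ.
  by exists K; rewrite !inE hK sQK.
rewrite !inE => /andP[hK sQK]; apply: clique_sub sQK; exact: maxsetp hK.
Qed.

Lemma nerve_chi (R : nzRingType) (T : finType) (e : rel T) (A : {set T}) :
  \sum_(S : {set {set T}} | S \subset MaxCliques e)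
     - (-1) ^+ #|S| * (bigcapS S :&: A != set0)%:R = chi R e A.
Proof.
rewrite /chi.
under eq_bigr => S _ do rewrite ind_sum mulr_sumr.
rewrite (exchange_big_dep (fun Q : {set T} => (Q \subset A) && (Q != set0))) /=; last first.
  by move=> S Q _ /andP[sQ ->]; rewrite andbT; apply: subset_trans sQ (subsetIr _ _).
have -> : \sum_(Q : {set T} | [&& Q \subset A, is_clique e Q & Q != set0]) - (-1) ^+ #|Q|
   = \sum_(Q : {set T} | (Q \subset A) && (Q != set0)) (is_clique e Q)%:R * - (-1) ^+ #|Q| :> R.
  rewrite big_mkcond [RHS]big_mkcond; apply: eq_bigr => Q _.
  by case: (Q \subset A); case: (is_clique e Q); case: (Q != set0); rewrite /= ?mul1r ?mul0r.
apply: eq_bigr => Q /andP[sQA hQ0]; rewrite -mulr_suml; congr (_ * _).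
rewrite clique_MC ind_sum; apply: eq_bigl => S.
rewrite hQ0 andbT subsetI sQA andbT /bigcapS.
case: eqP => [->|hS0].
  by rewrite subset0 (negbTE hQ0) andbF ?eqxx ?andbF.
rewrite andbT; apply/andP/subsetP => [[sMC /bigcapsP H] K hK|sMCQ].
  by rewrite inE (subsetP sMC _ hK) H.
split.
  by apply/subsetP => K /sMCQ; rewrite inE => /andP[].
by apply/bigcapsP => K /sMCQ; rewrite inE => /andP[].
Qed.


Lemma UT (T : finType) (A B : {set T}) : (A :|: B == setT) = (~: B \subset A).
Proof.
apply/eqP/subsetP => [H x hx | H].
  have : x \in A :|: B by rewrite H inE.
  by rewrite inE; move: hx; rewrite inE => /negbTE ->; rewrite orbF.
apply/setP => x; rewrite !inE; case hB: (x \in B); rewrite ?orbT //= orbF; apply: H.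
by rewrite inE hB.
Qed.

Lemma LV_inner (R : nzRingType) (T : finType) (B Y : {set T}) :
  \sum_(A : {set T} | (A \subset Y) && (A :|: B == setT)) - (-1) ^+ #|A :&: B|
    = - (B == ~: Y)%:R :> R.
Proof.
case: (boolP (~: B \subset Y)) => hBY; last first.
  rewrite big_pred0; last first.
    move=> A /=; rewrite UT; apply/negbTE/negP => /andP[sAY sBA].
    by move/negP: hBY; apply; apply: subset_trans sBA sAY.
  have -> : (B == ~: Y) = false.
    by apply/negbTE; apply: contra hBY => /eqP ->; rewrite setCK.
  by rewrite oppr0.
rewrite (reindex_onto (fun C => ~: B :|: C) (fun A => A :&: B)) /=; last first.
  move=> A /andP[_]; rewrite UT => /subsetP sBA; apply/setP => x; rewrite !inE.
  case hB: (x \in B); rewrite /= ?andbT ?andbF ?orbF //.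
  by apply/esym/sBA; rewrite inE hB.
have -> : \sum_(j : {set T} | (~: B :|: j \subset Y) && (~: B :|: j :|: B == setT)
              && ((~: B :|: j) :&: B == j)) - (-1) ^+ #|(~: B :|: j) :&: B|
   = - \sum_(C : {set T} | C \subset B :&: Y) (-1) ^+ #|C| :> R.
  rewrite -sumrN; apply: eq_big => C.
    have E : (~: B :|: C) :&: B = C :&: B by rewrite setIUl setIC setICr set0U.
    rewrite subUset hBY /= UT subsetUl /= E subsetI ?andbT andbC; congr andb.
    exact: (sameP eqP setIidPl).
  by move=> /andP[_ /eqP ->].
rewrite alt_sum; suff -> : (B :&: Y == set0) = (B == ~: Y) by [].
apply/eqP/eqP => [H|->]; last by rewrite setIC setICr.
apply/setP=> x; rewrite inE; case hx: (x \in B).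
  apply/esym/negP => hY; have : x \in B :&: Y by rewrite inE hx hY.
  by rewrite H inE.
by apply/esym/negPn; apply: (subsetP hBY); rewrite inE hx.
Qed.


Lemma LV_sub (R : nzRingType) (T : finType) (g : {set T} -> R) (Y : {set T}) :
  \sum_(A : {set T} | A \subset Y) LV g A = - g (~: Y).
Proof.
rewrite /LV (exchange_big_dep xpredT) //=.
under eq_bigr => B _ do rewrite -mulr_suml LV_inner.
rewrite (bigD1 (~: Y)) //= eqxx mulN1r big1 ?addr0 // => B hB.
by rewrite (negbTE hB) oppr0 mul0r.
Qed.

Lemma LV_ind (R : nzRingType) (T : finType) (g : {set T} -> R) (X : {set T}) :
  \sum_(A : {set T}) LV g A * (X :&: A != set0)%:R = g X - g set0.
Proof.
have E A : (X :&: A != set0)%:R = 1 - (A \subset ~: X)%:R :> R.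
  have -> : (X :&: A != set0) = ~~ (A \subset ~: X).
    congr negb; apply/eqP/subsetP => [H x hx | H].
      rewrite inE; apply/negP => hX; have : x \in X :&: A by rewrite inE hX hx.
      by rewrite H inE.
    apply/setP => x; rewrite !inE; apply/negP => /andP[hX hA].
    by move: (H x hA); rewrite inE hX.
  by case: (A \subset ~: X); rewrite /= ?subrr ?subr0.
under eq_bigr => A _ do rewrite E mulrBr mulr1.
rewrite sumrB.
have -> : \sum_(A : {set T}) LV g A = \sum_(A : {set T} | A \subset setT) LV g A.
  by apply: eq_bigl => A; rewrite subsetT.
rewrite LV_sub setCT.
have -> : \sum_(A : {set T}) LV g A * (A \subset ~: X)%:R = \sum_(A : {set T} | A \subset ~: X) LV g A.
  rewrite [RHS]big_mkcond; apply: eq_bigr => A _.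
  by case: (A \subset ~: X); rewrite ?mulr1 ?mulr0.
by rewrite LV_sub setCK opprK addrC.
Qed.

Lemma MC_ne0 (T : finType) (e : rel T) : MaxCliques e != set0.
Proof.
have h0 : is_clique e set0 by apply/cliqueP => x y; rewrite inE.
have [K hK _] := maxset_exists h0.
by apply/set0Pn; exists K; rewrite inE.
Qed.

Lemma sum_MC0 (R : nzRingType) (T : finType) (e : rel T) :
  \sum_(S : {set {set T}} | S \subset MaxCliques e) - (-1) ^+ #|S| = 0 :> R.
Proof. by rewrite sumrN alt_sum (negbTE (MC_ne0 e)) oppr0. Qed.

Lemma img_meet (T T' : finType) (phi : T -> T') (X : {set T}) (A : {set T'}) :
  (X :&: phi @^-1: A != set0) = (phi @: X :&: A != set0).
Proof.
apply/set0Pn/set0Pn => [[x]|[y]]; rewrite !inE.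
  by move=> /andP[hx hA]; exists (phi x); rewrite inE imset_f.
by move=> /andP[/imsetP[x hx ->] hA]; exists x; rewrite !inE hx hA.
Qed.

Local Open Scope ring_scope.

Lemma main_gen (R : comNzRingType) (T : finType) (e : rel T) (T' : finType) (phi : T -> T')
    (g : {set T'} -> R) : chordal e ->
  \sum_(S : {set {set T}} | S \subset MaxCliques e) - ((-1) ^+ #|S|) * g (phi @: bigcapS S)
  = \sum_(A : {set T'}) LV g A * (CC e (phi @^-1: A))%:R.
Proof.
move=> Hch.
under [RHS]eq_bigr => A _ do rewrite -(@chi_CC R _ e Hch) -nerve_chi mulr_sumr.
rewrite exchange_big /=.
have inner (S : {set {set T}}) : \sum_(A : {set T'}) LV g A * (- (-1) ^+ #|S| * (bigcapS S :&: phi @^-1: A != set0)%:R)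
    = - (-1) ^+ #|S| * (g (phi @: bigcapS S) - g set0).
  rewrite -LV_ind mulr_sumr; apply: eq_bigr => A _.
  by rewrite mulrCA img_meet.
rewrite (eq_bigr _ (fun S _ => inner S)).
under [RHS]eq_bigr => S _ do rewrite mulrBr.
by rewrite sumrB -mulr_suml sum_MC0 mul0r subr0.
Qed.


Unset Implicit Arguments. Set Strict Implicit. Set Printing Implicit Defensive.
Local Open Scope ring_scope.

Theorem lemma3p5 (R : realFieldType) (T : finType) (e : rel T) :
  chordal e ->
  (* (b) *)
  (forall f : {set T} -> R,
     \sum_(S : {set {set T}} | S \subset MaxCliques e)
        - ((-1) ^+ #|S|) * f (bigcapS S)
     = \sum_(A : {set T}) LV f A * (CC e A)%:R)
  /\
  (* (c) *)
  (forall (T' : finType) (e' : rel T') (phi : T -> T'),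
     (forall x y, e x y -> e' (phi x) (phi y)) ->
     forall g : {set T'} -> R,
       \sum_(S : {set {set T}} | S \subset MaxCliques e)
          - ((-1) ^+ #|S|) * g (phi @: bigcapS S)
       = \sum_(A : {set T'}) LV g A * (CC e (phi @^-1: A))%:R).
Proof.
move=> Hch; split; last by move=> T' e' phi _ g; exact: main_gen.
move=> f.
have hid (X : {set T}) : [set id x | x in X] = X.
  by apply/setP=> x; apply/imsetP/idP => [[y hy ->] // | hx]; exists x.
have hpre (A : {set T}) : id @^-1: A = A by apply/setP=> x; rewrite inE.
transitivity (\sum_(S : {set {set T}} | S \subset MaxCliques e)
   - ((-1) ^+ #|S|) * f (id @: bigcapS S)).
  by apply: eq_bigr => S _; rewrite hid.
rewrite (@main_gen R T e T id f Hch); apply: eq_bigr => A _; by rewrite hpre.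
Qed.
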